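(* Let $p, q$ be probability distributions on a finite set $\mathcal{X}$ with $\mathrm{supp}(p)\subseteq\mathrm{supp}(q)$, let $L>0$, and let $\rho(x) := \log_2(p(x)/q(x))$ for $x\in\mathrm{supp}(p)$. Define $\eta_L(p,q) := D_{\mathrm{KL}}(p\|q) - D_{\mathrm{KL},L}(p\|q)$. Then \[ |\eta_L(p,q)| \le \mathbb{E}_{X\sim p}\bigl[(|\rho(X)|-L)\,\mathbf{1}\{|\rho(X)|>L\}\bigr], \] and hence \[ |\eta_L(p,q)| \le \Bigl(\log_2(1/p_{\min}) + \log_2(1/q_{\min})\Bigr)\Pr_{X\sim p}\bigl[|\rho(X)|>L\bigr], \] where $p_{\min} = \min_{x\in\mathrm{supp}(p)} p(x)$ and $q_{\min} = \min_{x\in\mathrm{supp}(q)} q(x)$. In particular, if $2^{-L}p(x)\le q(x)\le 2^{L}p(x)$ for every $x\in\mathrm{supp}(p)$ (equivalently $|\rho(x)|\le L$ on $\mathrm{supp}(p)$), then $\eta_L(p,q)=0$ and $D_{\mathrm{KL},L}(p\|q) = D_{\mathrm{KL}}(p\|q)$.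
   Context: All logarithms are base 2. $D_{\mathrm{KL}}(p\|q) = \sum_x p(x)\log_2(p(x)/q(x))$. For $u\in\mathbb{R}$, $\mathrm{clip}_L(u) := \max(-L,\min(L,u))$. The clipped log-ratio is $\ell_L(x) := \mathrm{clip}_L(\log_2(p(x)/q(x)))$ (with conventions $\log_2(p/0)=+\infty$ for $p>0$, $\log_2(0/q)=-\infty$ for $q>0$), and the clipped KL expectation is $D_{\mathrm{KL},L}(p\|q) := \sum_{x\in\mathcal{X}} p(x)\,\ell_L(x)$. *)

(* Defs.v *)
From HB Require Import structures.
From mathcomp Require Import all_boot all_order all_algebra.
From mathcomp Require Import all_classical all_reals all_analysis.
Set Implicit Arguments. Unset Strict Implicit. Unset Printing Implicit Defensive.
Import Order.TTheory GRing.Theory Num.Theory.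
Local Open Scope ring_scope.

Section Defs.
Variables (R : realType) (T : finType).

Definition log2 (x : R) : R := ln x / ln 2.

Definition is_distr (p : T -> R) : Prop := (forall x, 0 <= p x) /\ \sum_x p x = 1.

Definition supp_sub (p q : T -> R) : Prop := forall x, 0 < p x -> 0 < q x.

Definition clip (L u : R) : R := Num.max (- L) (Num.min L u).

(* KL divergence (convention 0 log 0 = 0: sum over supp p); finite when supp p ⊆ supp q *)
Definition DKL (p q : T -> R) : R :=
  \sum_(x | 0 < p x) p x * log2 (p x / q x).

(* clipped log-ratio with conventions log(p/0) = +oo (clipped to L) for p>0,
   log(0/q) = -oo (clipped to -L) for q>0 *)
Definition ellL (L : R) (p q : T -> R) (x : T) : R :=
  if (0 < p x) && (q x == 0) then L
  else if (p x == 0) && (0 < q x) then - L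
  else clip L (log2 (p x / q x)).

Definition DKL_L (L : R) (p q : T -> R) : R := \sum_x p x * ellL L p q x.

Definition etaL (L : R) (p q : T -> R) : R := DKL p q - DKL_L L p q.

Definition rho (p q : T -> R) (x : T) : R := log2 (p x / q x).

(* min over the support; p takes values in [0,1] so 1 is a harmless identity *)
Definition minsupp (p : T -> R) : R := \big[Num.min/1]_(x | 0 < p x) p x.

Definition excess (L : R) (p q : T -> R) : R :=
  \sum_(x | 0 < p x) p x * (if L < `|rho p q x| then `|rho p q x| - L else 0).

Definition tailprob (L : R) (p q : T -> R) : R :=
  \sum_(x | (0 < p x) && (L < `|rho p q x|)) p x.

End Defs.

(* Main.v *)
Require Import Defs.
From HB Require Import structures.
From mathcomp Require Import all_boot all_order all_algebra.
From mathcomp Require Import all_classical all_reals all_analysis.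
From mathcomp Require Import ring lra.
Import Order.TTheory GRing.Theory Num.Theory.
Local Open Scope ring_scope.
Set Implicit Arguments. Unset Strict Implicit.

Lemma clip_diff (R : realType) (L u : R) : 0 < L ->
  `|u - clip L u| = if L < `|u| then `|u| - L else 0.
Proof.
move=> L0; rewrite /clip.
have [Lu|uL] := boolP (L < u); last rewrite -leNgt in uL.
  rewrite min_l ?ltW // max_r; last by lra.
  have -> : `|u| = u by apply/ger0_norm; lra.
  rewrite Lu ger0_norm //; lra.
have [uL'|uL'] := boolP (u < - L); last rewrite -leNgt in uL'.
  rewrite min_r // max_l; last by lra.
  have -> : `|u| = - u by apply/ltr0_norm; lra.
  have -> : L < - u by lra.
  rewrite ltr0_norm; lra.
rewrite min_r // max_r //.
have -> : L < `|u| = false.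
  apply/negbTE; rewrite -leNgt ler_norml; lra.
by rewrite subrr normr0.
Qed.

Lemma eta_sum (R : realType) (T : finType) (p q : T -> R) (L : R) :
  is_distr p -> supp_sub p q ->
  etaL L p q = \sum_(x | 0 < p x) p x * (rho p q x - clip L (rho p q x)).
Proof.
move=> [p0 _] sq; rewrite /etaL /DKL_L (bigID (fun x => 0 < p x)) /= /DKL.
rewrite [X in _ - (_ + X)]big1; last first.
  move=> x px; have -> : p x = 0 by apply/eqP; rewrite eq_le p0 andbT leNgt.
  by rewrite mul0r.
rewrite addr0 -sumrB; apply: eq_bigr => x px.
rewrite /ellL px /= (gt_eqF (sq x px)) (gt_eqF px) /= /rho; ring.
Qed.

Lemma excess_eq (R : realType) (T : finType) (p q : T -> R) (L : R) :
  is_distr p -> supp_sub p q -> 0 < L ->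
  `|etaL L p q| <= excess L p q.
Proof.
move=> dp sq L0; rewrite eta_sum //; apply: le_trans (ler_norm_sum _ _ _) _.
apply: ler_sum => x px; rewrite normrM gtr0_norm // clip_diff //.
Qed.

Lemma le1 (R : realType) (T : finType) (p : T -> R) x : is_distr p -> p x <= 1.
Proof.
move=> [p0 s1]; rewrite -s1 (bigD1 x) //= lerDl; exact: sumr_ge0.
Qed.

Lemma minsupp_gt0 (R : realType) (T : finType) (p : T -> R) : 0 < minsupp p.
Proof.
rewrite /minsupp; apply: (big_ind (fun y => 0 < y)) => //.
by move=> a b a0 b0; rewrite lt_min a0 b0.
Qed.

Lemma minsupp_le (R : realType) (T : finType) (p : T -> R) x :
  0 < p x -> minsupp p <= p x.
Proof.
move=> px; rewrite /minsupp (bigD1 x) //= ge_min lexx //.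
Qed.

Lemma ln2_gt0 (R : realType) : 0 < ln (2 : R).
Proof. apply: ln_gt0; lra. Qed.

Lemma log2_bound (R : realType) (T : finType) (p : T -> R) x :
  is_distr p -> 0 < p x ->
  0 <= - log2 (p x) <= log2 (1 / minsupp p).
Proof.
move=> dp px; have l2 := ln2_gt0 R; have m0 := minsupp_gt0 p.
rewrite /log2 mul1r lnV ?posrE // -!mulNr.
apply/andP; split.
  apply: divr_ge0; last exact: ltW; rewrite oppr_ge0 -ln1 ler_ln ?posrE //; exact: le1.
rewrite ler_pM2r ?invr_gt0 // lerN2 ler_ln ?posrE //; exact: minsupp_le.
Qed.

Lemma rho_split (R : realType) (T : finType) (p q : T -> R) x :
  0 < p x -> 0 < q x -> rho p q x = log2 (p x) - log2 (q x).
Proof.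
move=> px qx; rewrite /rho /log2 lnM ?posrE ?invr_gt0 // lnV ?posrE //.
rewrite mulrDl mulNr //.
Qed.

Unset Implicit Arguments. Set Strict Implicit.
Theorem lemma1 (R : realType) (T : finType) (p q : T -> R) (L : R) :
  is_distr p -> is_distr q -> supp_sub p q -> 0 < L ->
  `|etaL L p q| <= excess L p q /\
  `|etaL L p q| <= (log2 (1 / minsupp p) + log2 (1 / minsupp q)) * tailprob L p q /\
  ((forall x, 0 < p x -> (2 `^ (- L)) * p x <= q x /\ q x <= (2 `^ L) * p x) ->
     etaL L p q = 0 /\ DKL_L L p q = DKL p q).
Proof.
move=> dp dq sq L0; have E := excess_eq dp sq L0.
split => //; split.
  apply: le_trans E _; rewrite /excess /tailprob mulr_sumr big_mkcondr /=.
  apply: ler_sum => x px; case: ifP => H; last by rewrite mulr0.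
  rewrite mulrC ler_pM2r //.
  have qx := sq x px.
  move: (log2_bound dp px) (log2_bound dq qx).
  rewrite rho_split // => /andP[a1 a2] /andP[b1 b2].
  have : `|log2 (p x) - log2 (q x)| <= log2 (1 / minsupp p) + log2 (1 / minsupp q).
    rewrite ler_norml; apply/andP; split; lra.
  lra.
move=> H.
have e0 : excess L p q = 0.
  rewrite /excess big1 // => x px; case: ifP => //; last by rewrite mulr0.
  move=> Hlt; exfalso; move: Hlt; apply/negP; rewrite -leNgt ler_norml.
  have [h1 h2] := H x px; have qx := sq x px.
  have l2 := ln2_gt0 R.
  have t0 : forall a : R, 0 < 2 `^ a by move=> a; apply: powR_gt0; lra.
  rewrite rho_split // /log2.
  have k1 : ln (2 `^ (- L) * p x) <= ln (q x) by rewrite ler_ln ?posrE ?mulr_gt0.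
  have k2 : ln (q x) <= ln (2 `^ L * p x) by rewrite ler_ln ?posrE ?mulr_gt0.
  rewrite !lnM ?posrE // !ln_powR in k1 k2.
  rewrite -mulrBl ler_pdivrMr // ler_pdivlMr //.
  apply/andP; split; lra.
have eta0 : etaL L p q = 0 by apply/eqP; rewrite -normr_le0 -e0.
split => //; move/eqP: eta0; by rewrite /etaL subr_eq0 => /eqP ->.
Qed.
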